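(* Let $G$ and $H$ be connected graphs, each with at least $3$ vertices, let $\ell_1=\lambda_3(G)$, $\ell_2=\lambda_3(H)$, $n_2=|V(H)|$. Let $S=\{x,y,z\}$ be a set of three distinct vertices of $G\circ H$ all lying in the same $H$-layer $H(u)$ for some $u\in V(G)$. Then $G\circ H$ contains at least $\ell_2+\ell_1 n_2$ pairwise edge-disjoint $S$-trees.
   Context: For a graph $G$ and $S\subseteq V(G)$ with $|S|\ge 2$, an $S$-tree is a subgraph that is a tree containing all vertices of $S$; $\lambda(S)$ is the maximum number of pairwise edge-disjoint $S$-trees, and $\lambda_3(G)=\min\{\lambda(S): |S|=3\}$. The lexicographic product $G\circ H$ has vertex set $V(G)\times V(H)$, and $(u,v)$ is adjacent to $(u',v')$ iff either $uu'\in E(G)$, or $u=u'$ and $vv'\in E(H)$. For $u\in V(G)$, the $H$-layer $H(u)$ is the vertex set $\{(u,v): v\in V(H)\}$. *)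

(* Defs.v *)
From mathcomp Require Import all_boot.
Set Implicit Arguments. Unset Strict Implicit. Unset Printing Implicit Defensive.

Section Graphs.
Variable T : finType.
Variable e : rel T.

Definition simple_graph : Prop := symmetric e /\ irreflexive e.

Definition connected_graph : Prop := forall x y : T, connect e x y.

Definition is_edge (A : {set T}) : Prop := exists a b, e a b /\ A = [set a; b].

Definition sub_adj (F : {set {set T}}) : rel T := fun a b => [set a; b] \in F.

Definition subgraph (W : {set T}) (F : {set {set T}}) : Prop :=
  (forall A, A \in F -> is_edge A) /\ (forall A, A \in F -> A \subset W).

Definition is_tree (W : {set T}) (F : {set {set T}}) : Prop :=
  subgraph W F /\
  (forall a b, a \in W -> b \in W -> connect (sub_adj F) a b) /\
  ~ (exists s : seq T, [/\ uniq s, 3 <= size s & cycle (sub_adj F) s]).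

Definition S_tree (S : {set T}) (W : {set T}) (F : {set {set T}}) : Prop :=
  S \subset W /\ is_tree W F.

Definition has_disjoint_S_trees (S : {set T}) (k : nat) : Prop :=
  exists Tr : 'I_k -> {set T} * {set {set T}},
    (forall i, S_tree S (Tr i).1 (Tr i).2) /\
    (forall i j, i != j -> [disjoint (Tr i).2 & (Tr j).2]).

Definition is_lambda (S : {set T}) (l : nat) : Prop :=
  has_disjoint_S_trees S l /\ (forall k, has_disjoint_S_trees S k -> k <= l).

Definition is_lambda3 (l : nat) : Prop :=
  (exists S : {set T}, #|S| = 3 /\ is_lambda S l) /\
  (forall (S : {set T}) k, #|S| = 3 -> is_lambda S k -> l <= k).

End Graphs.

Definition lexprod (V1 V2 : finType) (eG : rel V1) (eH : rel V2) : rel (V1 * V2) :=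
  fun p q => eG p.1 q.1 || ((p.1 == q.1) && eH p.2 q.2).

(* Main.v *)
Require Import Defs.
From mathcomp Require Import all_boot.
From Stdlib Require Import Classical.
Set Implicit Arguments. Unset Strict Implicit. Unset Printing Implicit Defensive.

Lemma disjP (T : finType) (A B : {set T}) :
  (forall t, t \in A -> t \in B -> False) -> [disjoint A & B].
Proof.
move=> H; apply/pred0P => t /=; apply/negbTE/negP => /andP[ha hb]; exact: H ha hb.
Qed.

Lemma edge_sym (T : finType) (e : rel T) a b a' b' :
  simple_graph e -> [set a; b] = [set a'; b'] -> e a' b' -> e a b.
Proof.
move=> [sy ir] E h.
have ha : a \in [set a'; b'] by rewrite -E set21.
have hb : b \in [set a'; b'] by rewrite -E set22.
have ha' : a' \in [set a; b] by rewrite E set21.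
have hb' : b' \in [set a; b] by rewrite E set22.
move/set2P: ha => [Ea|Ea]; move/set2P: hb => [Eb|Eb].
- rewrite Ea Eb in hb'; move/set2P: hb' => [Eb'|Eb']; by rewrite Eb' ir in h.
- by rewrite Ea Eb.
- by rewrite Ea Eb sy.
- rewrite Ea Eb in ha'; move/set2P: ha' => [Ea'|Ea']; by rewrite Ea' ir in h.
Qed.

Lemma tree_nbr (T : finType) (e : rel T) S W F a s :
  simple_graph e -> S_tree e S W F -> a \in S -> s \in S -> a != s ->
  exists b, [set a; b] \in F /\ e a b.
Proof.
move=> sg [sub [[edg _] [con _]]] aS sS neq.
have := con a s (subsetP sub a aS) (subsetP sub s sS).
case/connectP => p pth lst.
case: p pth lst => [|b p] /=; first by move=> _ E; rewrite E eqxx in neq.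
move=> /andP[ab _] _; exists b; split=> //.
have [a' [b' [h E]]] := edg _ ab.
exact: edge_sym sg E h.
Qed.

Lemma trees_inj (T : finType) (e : rel T) S k a s
  (Tr : 'I_k -> {set T} * {set {set T}}) :
  simple_graph e -> (forall i, S_tree e S (Tr i).1 (Tr i).2) ->
  (forall i j, i != j -> [disjoint (Tr i).2 & (Tr j).2]) ->
  a \in S -> s \in S -> a != s ->
  exists f : 'I_k -> T, injective f /\ forall i, e a (f i).
Proof.
move=> sg tr dj aS sS neq.
have H : forall i, exists b, [set a; b] \in (Tr i).2 /\ e a b.
  by move=> i; exact: tree_nbr sg (tr i) aS sS neq.
pose f i := odflt a [pick b | ([set a; b] \in (Tr i).2) && e a b].
have fP i : [set a; f i] \in (Tr i).2 /\ e a (f i).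
  rewrite /f; case: pickP => [b /andP[]//|/= N].
  have [b [h1 h2]] := H i; by move: (N b); rewrite h1 h2.
exists f; split; last by move=> i; case: (fP i).
move=> i j E; apply/eqP; apply/negPn/negP => nij.
have := dj _ _ nij; move/pred0P/(_ [set a; f i]) => /=.
by rewrite (fP i).1 E (fP j).1.
Qed.

Lemma trees_bound (T : finType) (e : rel T) S k a s :
  simple_graph e -> has_disjoint_S_trees e S k -> a \in S -> s \in S -> a != s ->
  k <= #|T|.
Proof.
move=> sg [Tr [tr dj]] aS sS neq.
have [f [fi _]] := trees_inj sg tr dj aS sS neq.
by rewrite -(card_ord k) -(card_imset predT fi) max_card.
Qed.

Lemma max_exists (P : nat -> Prop) d :
  P 0 -> (forall k, P k -> k <= d) -> exists m, P m /\ forall k, P k -> k <= m.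
Proof.
move=> P0 B; apply: NNPP => N.
have H : forall n, exists m, P m /\ n <= m.
  elim=> [|n [m [Pm le]]]; first by exists 0.
  have: ~ (forall k, P k -> k <= m) by move=> A; apply: N; exists m.
  move/not_all_ex_not => [k Hk]; have [Pk Nk] := imply_to_and _ _ Hk.
  have lt : m < k by rewrite ltnNge; apply/negP.
  by exists k; split=> //; apply: leq_ltn_trans lt.
have [m [Pm le]] := H d.+1.
by have := B m Pm; rewrite leqNgt le.
Qed.

Lemma has0 (T : finType) (e : rel T) S : has_disjoint_S_trees e S 0.
Proof. by exists (fun _ => (set0, set0)); split; case. Qed.

Lemma has_mono (T : finType) (e : rel T) S k m :
  has_disjoint_S_trees e S k -> m <= k -> has_disjoint_S_trees e S m.
Proof.
move=> [Tr [tr dj]] le; exists (fun i => Tr (widen_ord le i)); split=> // i j nij.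
apply: dj; apply: contra nij => /eqP E; apply/eqP/val_inj; move: E => /(congr1 val) //.
Qed.

Lemma lambda3_trees (T : finType) (e : rel T) l (S : {set T}) (a s : T) :
  simple_graph e -> is_lambda3 e l -> #|S| = 3 -> a \in S -> s \in S -> a != s ->
  has_disjoint_S_trees e S l /\
  exists f : 'I_l -> T, injective f /\ forall i, e a (f i).
Proof.
move=> sg [_ L] c3 aS sS neq.
have [m [Pm Mx]] := max_exists (has0 e S)
   (fun k (h : has_disjoint_S_trees e S k) => trees_bound sg h aS sS neq).
have lm := L S m c3 (conj Pm Mx).
have hl := has_mono Pm lm; split=> //.
case: hl => [Tr [tr dj]]; exact: trees_inj sg tr dj aS sS neq.
Qed.

Lemma imset2 (T T' : finType) (f : T -> T') a b : f @: [set a; b] = [set f a; f b].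
Proof. by rewrite imsetU1 imset_set1. Qed.

Definition liftF (T T' : finType) (f : T -> T') (F : {set {set T}}) : {set {set T'}} :=
  [set f @: (A : {set T}) | A in F].

Lemma lift_adj (T T' : finType) (f : T -> T') (g : T' -> T) (F : {set {set T}}) p q :
  cancel f g -> sub_adj (liftF f F) p q ->
  [/\ p = f (g p), q = f (g q) & sub_adj F (g p) (g q)].
Proof.
move=> fK /imsetP [A AF E].
have : p \in f @: A by rewrite -E set21.
have : q \in f @: A by rewrite -E set22.
move=> /imsetP [b _ Eq] /imsetP [a _ Ep]; subst p q; rewrite !fK; split=> //.
rewrite /sub_adj; suff -> : [set a; b] = A by [].
apply: (imset_inj (can_inj fK)); by rewrite imset2 E.
Qed.

Lemma lift_tree (T T' : finType) (e : rel T) (e' : rel T') (f : T -> T') (g : T' -> T)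
  S W F :
  cancel f g -> (forall a b, e a b -> e' (f a) (f b)) -> S_tree e S W F ->
  S_tree e' (f @: S) (f @: W) (liftF f F).
Proof.
move=> fK he [sub [[edg sW] [con acy]]].
split; first exact: imsetS.
split; [split|split].
- move=> _ /imsetP [A AF ->]; have [a [b [h ->]]] := edg A AF.
  by exists (f a), (f b); rewrite imset2; split=> //; apply: he.
- by move=> _ /imsetP [A AF ->]; apply: imsetS; apply: sW.
- move=> _ _ /imsetP [a aW ->] /imsetP [b bW ->].
  case/connectP: (con a b aW bW) => p pth lst.
  apply/connectP; exists (map f p); last by rewrite last_map lst.
  rewrite path_map; apply: sub_path pth => x y xy.
  by rewrite /= /sub_adj -imset2; apply: imset_f.
- move=> [s [us ss cs]]; apply: acy; exists (map g s).
  have key : forall p, p \in s -> p = f (g p).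
    by move=> p ps; have [] := lift_adj fK (next_cycle cs ps).
  split.
  + by rewrite map_inj_in_uniq // => p q ps qs E; rewrite (key p ps) (key q qs) E.
  + by rewrite size_map.
  + rewrite cycle_map; apply: sub_cycle cs => p q pq.
    by have [] := lift_adj fK pq.
Qed.

Definition starF (T : finType) (c t1 t2 t3 : T) : {set {set T}} :=
  [set [set c; t1]; [set c; t2]; [set c; t3]].

Lemma star_adj (T : finType) (c t1 t2 t3 p q : T) :
  sub_adj (starF c t1 t2 t3) p q -> (p == c) || (q == c).
Proof.
rewrite /sub_adj /starF !inE => H; repeat (case/orP: H => H);
  move/eqP: H => E;
  have cpq : c \in [set p; q] by rewrite E set21.
  all: by move: cpq; rewrite !inE eq_sym (eq_sym c q).
Qed.

Lemma star_tree (T : finType) (e : rel T) (c t1 t2 t3 : T) :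
  simple_graph e -> e c t1 -> e c t2 -> e c t3 ->
  S_tree e [set t1; t2; t3] (c |: [set t1; t2; t3]) (starF c t1 t2 t3).
Proof.
move=> sg h1 h2 h3.
have cv : forall v, v \in c |: [set t1; t2; t3] -> connect (sub_adj (starF c t1 t2 t3)) c v
        /\ connect (sub_adj (starF c t1 t2 t3)) v c.
  move=> v; rewrite !inE => H; repeat (case/orP: H => H); move/eqP: H => ->; split; rewrite ?connect0 //; apply: connect1;
    by rewrite /sub_adj /starF !inE ?eqxx ?orbT // setUC eqxx ?orbT.
split; first by apply/subsetP => v vS; rewrite in_setU1 vS orbT.
split; [split|split].
- move=> A; rewrite /starF !inE => H; repeat (case/orP: H => H); move/eqP: H => ->.
  + by exists c, t1.
  + by exists c, t2.
  + by exists c, t3.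
- move=> A; rewrite /starF !inE => H; repeat (case/orP: H => H); move/eqP: H => -> ;
    apply/subsetP => v; by rewrite !inE => /orP [] /eqP ->; rewrite eqxx ?orbT.
- move=> a b aW bW; apply: (connect_trans (cv a aW).2 (cv b bW).1).
- move=> [s [us ss cs]].
  have pc : forall p, p \in s -> p != c -> prev s p = c.
    move=> p ps pn; have := star_adj (prev_cycle cs ps).
    by rewrite (negbTE pn) orbF => /eqP.
  have two : forall p q, p \in s -> q \in s -> p != c -> q != c -> p = q.
    move=> p q ps qs pn qn.
    by rewrite -(next_prev us p) -(next_prev us q) (pc p ps pn) (pc q qs qn).
  case: s us ss cs pc two => [|a [|b [|d r]]] // us _ _ _ two.
  move: us; rewrite /= !inE => /andP [/norP [ab /norP [ad _]] /andP [/norP [bd _] _]].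
  have as_ : a \in [:: a, b, d & r] by rewrite inE eqxx.
  have bs : b \in [:: a, b, d & r] by rewrite !inE eqxx orbT.
  have ds : d \in [:: a, b, d & r] by rewrite !inE eqxx !orbT.
  case: (eqVneq a c) => [ac|anc].
  + have bc : b != c by rewrite -ac eq_sym.
    have dc : d != c by rewrite -ac eq_sym.
    by move: bd; rewrite (two b d bs ds bc dc) eqxx.
  + case: (eqVneq b c) => [bc|bnc].
    * have dc : d != c by rewrite -bc eq_sym.
      by move: ad; rewrite (two a d as_ ds anc dc) eqxx.
    * by move: ab; rewrite (two a b as_ bs anc bnc) eqxx.
Qed.

Lemma starF_mem (T : finType) (c t1 t2 t3 E : T) (A : {set T}) :
  A \in starF c t1 t2 t3 -> c \in A /\ (E \in A -> E = c \/ E \in [set t1; t2; t3]).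
Proof.
rewrite /starF !inE => H; repeat (case/orP: H => H); move/eqP: H => ->;
 (split; [by rewrite set21 | move/set2P => [->|->]; [by left | right]]);
 by rewrite eqxx ?orbT.
Qed.

Lemma has_of_fam (T : finType) (e : rel T) S (I : finType)
  (Tr : I -> {set T} * {set {set T}}) k :
  #|I| = k -> (forall i, S_tree e S (Tr i).1 (Tr i).2) ->
  (forall i j, i != j -> [disjoint (Tr i).2 & (Tr j).2]) ->
  has_disjoint_S_trees e S k.
Proof.
move=> <- tr dj; exists (fun i => Tr (enum_val i)); split=> // i j nij.
by apply: dj; apply: contra nij => /eqP /enum_val_inj ->.
Qed.

Lemma card3 (T : finType) (a b c : T) :
  a != b -> b != c -> a != c -> #|[set a; b; c]| = 3.
Proof.
by move=> ab bc ac; rewrite setUC cardsU1 cards2 in_set2 eq_sym (negbTE ac) eq_sym (negbTE bc) ab.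
Qed.

Lemma third (T : finType) (a b : T) : 3 <= #|T| -> exists c, (c != a) && (c != b).
Proof.
move=> h; case: (pickP (fun c => (c != a) && (c != b))) => [c hc|N]; first by exists c.
have : [set: T] \subset [set a; b].
  apply/subsetP => v _; have := N v; rewrite /= in_set2.
  by case: (v == a); case: (v == b).
move/subset_leq_card; rewrite cardsT cards2 => le.
by have := leq_trans h le; case: (a != b).
Qed.

Lemma lex_simple (V1 V2 : finType) (eG : rel V1) (eH : rel V2) :
  simple_graph eG -> simple_graph eH -> simple_graph (lexprod eG eH).
Proof.
move=> [sG iG] [sH iH]; split.
- by move=> p q; rewrite /lexprod sG sH eq_sym.
- by move=> p; rewrite /lexprod iG iH andbF.
Qed.

Theorem lemma3p1 (V1 V2 : finType) (eG : rel V1) (eH : rel V2)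
  (l1 l2 : nat) (u : V1) (x y z : V1 * V2) :
  simple_graph eG -> simple_graph eH ->
  connected_graph eG -> connected_graph eH ->
  3 <= #|V1| -> 3 <= #|V2| ->
  is_lambda3 eG l1 -> is_lambda3 eH l2 ->
  x != y -> y != z -> x != z ->
  x.1 = u -> y.1 = u -> z.1 = u ->
  has_disjoint_S_trees (lexprod eG eH) [set x; y; z] (l2 + l1 * #|V2|).
Proof.
move=> sG sH _ _ c1 _ LG LH xy yz xz x1 y1 z1.
have ex : x = (u, x.2) by rewrite -x1; case: x {xy xz x1}.
have ey : y = (u, y.2) by rewrite -y1; case: y {xy yz y1}.
have ez : z = (u, z.2) by rewrite -z1; case: z {yz xz z1}.
have ab : x.2 != y.2 by apply: contra xy => /eqP E; rewrite ex ey E.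
have bc : y.2 != z.2 by apply: contra yz => /eqP E; rewrite ey ez E.
have ac : x.2 != z.2 by apply: contra xz => /eqP E; rewrite ex ez E.
have aS : x.2 \in [set x.2; y.2; z.2] by rewrite !inE eqxx.
have bS : y.2 \in [set x.2; y.2; z.2] by rewrite !inE eqxx ?orbT.
have [HT _] := lambda3_trees sH LH (card3 ab bc ac) aS bS ab.
case: HT => TrH [trH djH].
have [w1 /andP [w1u _]] := third u u c1.
have [w2 /andP [w2u w2w1]] := third u w1 c1.
have uw1 : u != w1 by rewrite eq_sym.
have w12 : w1 != w2 by rewrite eq_sym.
have uw2 : u != w2 by rewrite eq_sym.
have uS : u \in [set u; w1; w2] by rewrite !inE eqxx.
have w1S : w1 \in [set u; w1; w2] by rewrite !inE eqxx ?orbT.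
have [_ [g [gi gN]]] := lambda3_trees sG LG (card3 uw1 w12 uw2) uS w1S uw1.
have gu : forall j, g j != u.
  by move=> j; apply/eqP => E; have := gN j; rewrite E (proj2 sG).
pose Tr (i : 'I_l2 + ('I_l1 * V2)) : {set V1 * V2} * {set {set V1 * V2}} :=
  match i with
  | inl j => (pair u @: (TrH j).1, liftF (pair u) (TrH j).2)
  | inr jv => ((g jv.1, jv.2) |: [set x; y; z], starF (g jv.1, jv.2) x y z)
  end.
apply: (@has_of_fam _ _ _ _ Tr); first by rewrite card_sum card_prod !card_ord.
- case=> [j | [j v]] /=.
  + have -> : [set x; y; z] = pair u @: [set x.2; y.2; z.2].
      by rewrite imsetU imset2 imset_set1 -ex -ey -ez.
    apply: (@lift_tree _ _ _ _ (pair u) snd _ _ _ (fun _ => erefl) _ (trH j)) => a b h; by rewrite /lexprod /= eqxx h orbT.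
  + have es : forall t, t.1 = u -> lexprod eG eH (g j, v) t.
      by move=> t t1; rewrite /lexprod /= t1 (proj1 sG) gN.
    exact: star_tree (lex_simple sG sH) (es _ x1) (es _ y1) (es _ z1).
- have lay : forall j A, A \in liftF (pair u) (TrH j).2 -> forall p, p \in A -> p.1 = u.
    by move=> j A /imsetP [B _ ->] p /imsetP [q _ ->].
  have sd : forall j v A, A \in starF (g j, v) x y z -> (g j, v) \in A /\
      (forall p, p \in A -> p = (g j, v) \/ p.1 = u).
    move=> j v A AS; split; first by have [] := starF_mem (g j, v) AS.
    move=> p pA; have [_ h2] := starF_mem p AS; case: (h2 pA) => [->|p0]; first by left.
    by right; move: p0; rewrite !inE => H; repeat (case/orP: H => H); move/eqP: H => ->.
  case=> [j | [j v]] [j' | [j' v']] nij /=.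
  + rewrite /liftF imset_disjoint; last by apply: imset_inj => a b [].
    apply: djH; by apply: contra nij => /eqP ->.
  + apply: disjP => A h1 h2; have [cA _] := sd _ _ _ h2.
    by have := lay _ _ h1 _ cA => /= E; move: (gu j'); rewrite E eqxx.
  + apply: disjP => A h1 h2; have [cA _] := sd _ _ _ h1.
    by have := lay _ _ h2 _ cA => /= E; move: (gu j); rewrite E eqxx.
  + apply: disjP => A h1 h2; have [cA _] := sd _ _ _ h1.
    have [_ h] := sd _ _ _ h2; case: (h _ cA) => [[E1 E2]|/= E].
    * move: nij; by rewrite (gi _ _ E1) E2 eqxx.
    * by move: (gu j); rewrite E eqxx.
Qed.
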